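(* Let $\varepsilon\in[0,1)$ and let $\rho',\tau'\in\mathcal{D}(P')$ be density operators. Let $\mathcal{P},\mathcal{E}\subseteq\mathcal{D}(P)$ satisfy $\operatorname{conv}(\mathcal{P})\cap\operatorname{aff}(\mathcal{E})\neq\emptyset$. Then there exists a linear map $\mathcal{L}$ from operators on $P$ to operators on $P'$ such that, for every $\rho\in\mathcal{P}$ and every $\tau\in\mathcal{E}$, $T(\mathcal{L}(\rho),\rho')\le\varepsilon$ and $\mathcal{L}(\tau)=\tau'$ (i.e. the conversion $(\mathcal{P},\mathcal{E})\xrightarrow{\mathcal{L},\varepsilon}(\rho',\tau')$ is achievable by some Gibbs-preserving linear map) if and only if $\varepsilon\ge T(\rho',\tau')$.
   Context: All Hilbert spaces are finite-dimensional; $\mathcal{D}(P)$ is the set of density operators on system $P$. The trace distance is $T(X,Y)=\tfrac12\|X-Y\|_1$. $\operatorname{conv}(\mathcal{P})$ is the convex hull and $\operatorname{aff}(\mathcal{E})=\{\sum_i a_i\tau_i:\tau_i\in\mathcal{E},a_i\in\mathbb{R},\sum_i a_i=1\}$ the affine hull. An uncertain athermal state is a pair of sets $(\mathcal{P},\mathcal{E})$ of candidate nonequilibrium and equilibrium (Gibbs) states. For a map $\mathcal{F}$, the conversion $(\mathcal{P},\mathcal{E})\xrightarrow{\mathcal{F},\varepsilon}(\mathcal{P}',\mathcal{E}')$ means: for every $(\rho,\tau)\in\mathcal{P}\times\mathcal{E}$ there exists $(\rho',\tau')\in\mathcal{P}'\times\mathcal{E}'$ with $T(\mathcal{F}(\rho),\rho')\le\varepsilon$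 and $\mathcal{F}(\tau)=\tau'$; singleton sets are identified with their element. The class GPL (Gibbs-preserving linear maps) consists of all linear maps sending the input Gibbs state to the output Gibbs state; in this framework that requirement is precisely the condition $\mathcal{F}(\tau)=\tau'$ in the conversion. *)

(* Defs.v *)
(* Complex scalars: an arbitrary numClosedFieldType C
   (e.g. the complex numbers R[i] over a real closed field, or algC). *)
From HB Require Import structures.
From mathcomp Require Import all_boot all_order all_algebra.
From Stdlib Require Import ClassicalEpsilon.
Set Implicit Arguments. Unset Strict Implicit. Unset Printing Implicit Defensive.
Import Order.TTheory GRing.Theory Num.Theory.
Local Open Scope ring_scope.

Section Quantum.
Variable C : numClosedFieldType.

Definition adj (m n : nat) (A : 'M[C]_(m, n)) : 'M[C]_(n, m) :=
  (map_mx (fun z => z^*) A)^T.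

Definition psd (n : nat) (A : 'M[C]_n) : Prop :=
  adj A = A /\ forall v : 'cV[C]_n, 0 <= (adj v *m A *m v) 0 0.

Definition density (n : nat) (A : 'M[C]_n) : Prop := psd A /\ \tr A = 1.

Definition unitary (n : nat) (U : 'M[C]_n) : Prop := U *m adj U = 1%:M.

Definition is_svd (n : nat) (A : 'M[C]_n) (s : 'rV[C]_n) : Prop :=
  (forall i, 0 <= s 0 i) /\
  exists U V : 'M[C]_n, unitary U /\ unitary V /\ A = U *m diag_mx s *m adj V.

(* trace norm ||A||_1 = sum of the singular values of A
   (singular values exist and are unique up to permutation) *)
Definition trnorm (n : nat) (A : 'M[C]_n) : C :=
  let s := epsilon (inhabits (0 : 'rV[C]_n)) (is_svd A) in \sum_i s 0 i.

Definition tdist (n : nat) (X Y : 'M[C]_n) : C := trnorm (X - Y) / 2.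

Definition conv_hull (n : nat) (S : 'M[C]_n -> Prop) (X : 'M[C]_n) : Prop :=
  exists (k : nat) (w : 'I_k -> C) (x : 'I_k -> 'M[C]_n),
    (forall i, 0 <= w i) /\ \sum_i w i = 1 /\ (forall i, S (x i)) /\
    X = \sum_i w i *: x i.

Definition aff_hull (n : nat) (S : 'M[C]_n -> Prop) (X : 'M[C]_n) : Prop :=
  exists (k : nat) (a : 'I_k -> C) (x : 'I_k -> 'M[C]_n),
    (forall i, a i \is Num.real) /\ \sum_i a i = 1 /\ (forall i, S (x i)) /\
    X = \sum_i a i *: x i.

End Quantum.

(* Main.v *)
Require Import Defs.
From HB Require Import structures.
From mathcomp Require Import all_boot all_order all_algebra zify.
From Stdlib Require Import ClassicalEpsilon.
Set Implicit Arguments. Unset Strict Implicit. Unset Printing Implicit Defensive.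
Import Order.TTheory GRing.Theory Num.Theory.
Local Open Scope ring_scope.
Local Open Scope sesquilinear_scope.

Section A.
Variable C : numClosedFieldType.
Lemma adjE m n (A : 'M[C]_(m,n)) : adj A = A ^t*.
Proof. by rewrite /adj map_trmx. Qed.
Lemma unitaryE n (U : 'M[C]_n) : unitary U <-> U \is unitarymx.
Proof. by rewrite /unitary adjE; split => [?|/unitarymxP]; [apply/unitarymxP|]. Qed.

Lemma unitary_entry_le n (M : 'M[C]_n) i : M \is unitarymx -> `|M i i| <= 1.
Proof.
move=> /unitarymxP /matrixP /(_ i i); rewrite !mxE eqxx /= (bigD1 i) //= !mxE.
rewrite -normCK => H.
have H2 : `|M i i| ^+ 2 <= `|M i i| ^+ 2 + \sum_(i0 < n | i0 != i) M i i0 * (M ^t*) i0 i.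
  rewrite lerDl sumr_ge0 // => j _; rewrite !mxE mul_conjC_ge0 //.
rewrite H /= in H2.
rewrite -(@ler_pXn2r _ 2) // ?expr1n // nnegrE //.
Qed.

Lemma re_tr_le n (M : 'M[C]_n) (s : 'rV[C]_n) : M \is unitarymx ->
  (forall i, 0 <= s 0 i) -> 'Re (\tr (M *m diag_mx s)) <= \sum_i s 0 i.
Proof.
move=> Mu s0; rewrite /mxtrace raddf_sum /=; apply: ler_sum => i _.
rewrite mul_mx_diag mxE ReMr ?ger0_real //.
apply: (le_trans (y := `|M i i| * s 0 i)).
  by rewrite ler_wpM2r // (leif_Re_Creal _).1.
by rewrite ler_piMl // unitary_entry_le.
Qed.

Lemma sum_enum n (T : {set 'I_n}) i :
  \sum_(j < #|T|) ((i == enum_val j)%:R : C) = (i \in T)%:R.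
Proof.
case: (boolP (i \in T)) => iT.
  rewrite (bigD1 (enum_rank_in iT i)) //= enum_rankK_in // eqxx big1 ?addr0 //.
  move=> j jne; case: eqP => // ie; move: jne.
  by rewrite {2}ie enum_valK_in eqxx.
rewrite big1 // => j _; case: eqP => // ie; by move: iT; rewrite ie enum_valP.
Qed.

Definition selmx n (T : {set 'I_n}) : 'M[C]_(n, #|T|) :=
  \matrix_(i, j) (i == enum_val j)%:R.

Lemma selmx_tr n (T : {set 'I_n}) :
  selmx T *m (selmx T)^t* = diag_mx (\row_i (i \in T)%:R).
Proof.
apply/matrixP => i i'; rewrite !mxE.
case: (eqVneq i i') => [<-|ne].
  rewrite mulr1n -(sum_enum T i); apply: eq_bigr => j _.
  by rewrite !mxE conjC_nat; case: (i == enum_val j); rewrite ?mulr1 ?mulr0.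
rewrite mulr0n big1 // => j _; rewrite !mxE conjC_nat.
case: (eqVneq i (enum_val j)) => [ie|]; last by rewrite mul0r.
by move: ne; rewrite ie eq_sym => /negbTE ->; rewrite mulr0.
Qed.

Lemma unitary_sq n (U : 'M[C]_n) : U \is unitarymx -> U^t* *m U = 1%:M.
Proof. by move=> /unitarymxP /mulmx1C. Qed.

Lemma svd_exists n (A : 'M[C]_n) : exists s, is_svd A s.
Proof.
pose H := A *m A^t*.
have Hn : H \is normalmx.
  apply/normalmxP; suff -> : H^t* = H by [].
  by rewrite /H trmx_mul map_mxM trmxCK.
have /orthomx_spectralP := Hn.
set P := spectralmx H; set d := spectral_diag H => HE.
have Pu : P \is unitarymx := spectral_unitarymx H.
rewrite invmx_unitary // in HE.
pose B := P *m A.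
have BE : B = P *m A by [].
clearbody B.
have BB : B *m B^t* = diag_mx d.
  rewrite BE trmx_mul map_mxM !mulmxA -(mulmxA P) -/H HE.
  by rewrite !mulmxA (unitarymxP Pu) mul1mx -mulmxA (unitarymxP Pu) mulmx1.
have dE i : d 0 i = \sum_j B i j * (B i j)^*.
  have /matrixP/(_ i i) := BB; rewrite !mxE eqxx mulr1n => <-.
  by apply: eq_bigr => j _; rewrite !mxE.
have d0 i : 0 <= d 0 i by rewrite dE sumr_ge0 // => j _; rewrite mul_conjC_ge0.
pose s := \row_i sqrtC (d 0 i).
have s0 i : 0 <= s 0 i by rewrite mxE sqrtC_ge0.
have sC i : (s 0 i)^* = s 0 i by apply/CrealP/ger0_real.
have s2 i : s 0 i * s 0 i = d 0 i by rewrite -expr2 mxE sqrtCK.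
have Bz i j : s 0 i = 0 -> B i j = 0.
  move=> si0; have : d 0 i = 0 by rewrite -s2 si0 mulr0.
  rewrite dE => /psumr_eq0P => /(_ (fun l _ => mul_conjC_ge0 _) j isT) /eqP.
  by rewrite mul_conjC_eq0 => /eqP.
clearbody s.
pose t := \row_i (s 0 i)^-1.
have tE i : t 0 i = (s 0 i)^-1 by rewrite mxE.
clearbody t.
pose N0 := diag_mx t *m B.
have BN : B = diag_mx s *m N0.
  apply/matrixP => i j; rewrite /N0 mul_diag_mx mxE mul_diag_mx mxE tE.
  case: (eqVneq (s 0 i) 0) => [si|si]; first by rewrite si mul0r; exact: Bz.
  by rewrite mulrA divff // mul1r.
have NN : N0 *m N0^t* = diag_mx (\row_i (s 0 i != 0)%:R).
  rewrite /N0 trmx_mul map_mxM tr_diag_mx map_diag_mx mulmxA -(mulmxA _ B) BB.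
  apply/matrixP => i j; rewrite mul_mx_diag mxE mul_diag_mx !mxE.
  case: eqVneq => [<-|_]; last by rewrite /= !mulr0n mulr0 mul0r.
  rewrite /= !mulr1n -s2 tE fmorphV /= sC.
  case: (eqVneq (s 0 i) 0) => [->|si]; first by rewrite invr0 !mul0r.
  by rewrite mulrA mulVf // mul1r divff.
pose S := [set i | s 0 i == 0].
pose Sc := ~: S.
pose X := \matrix_(j < #|Sc|, l < n) N0 (enum_val j) l.
have NF : N0 = selmx Sc *m X.
  apply/matrixP => i l; rewrite [RHS]mxE.
  rewrite (eq_bigr (fun j => (i == enum_val j)%:R * N0 i l)); last first.
    move=> j _; rewrite !mxE; case: (eqVneq i (enum_val j)) => [<-|]; by rewrite ?mul0r.
  rewrite -mulr_suml sum_enum !inE.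
  case: (eqVneq (s 0 i) 0) => [si|si]; last by rewrite mul1r.
  by rewrite mul0r /N0 mul_diag_mx mxE tE si invr0 mul0r.
have rkN : (\rank N0 <= #|Sc|)%N.
  by rewrite NF (leq_trans (mxrankM_maxl _ _)) // rank_leq_col.
have cS : (#|S| + #|Sc|)%N = n by rewrite cardsC card_ord.
pose K := orthomx Num.Def.conjC (hermitian1mx n) N0.
have rK : \rank K = (n - \rank N0)%N := rank_ortho N0.
have kle : (#|S| <= \rank K)%N by rewrite rK; lia.
pose Z0 := schmidt (row_base K).
have Z0u : Z0 \is unitarymx := schmidt_unitarymx _ (rank_leq_col K).
have Z0K : (Z0 <= K)%MS.
  by rewrite (eqmx_schmidt_free (row_base_free K)) eq_row_base.
have Z0N : Z0 *m N0^t* = 0 by apply/orthomx1P.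
pose F2 : 'M[C]_(#|S|, \rank K) := pid_mx #|S|.
have F2u : F2 *m F2^t* = 1%:M.
  by rewrite /F2 tr_pid_mx map_pid_mx mul_pid_mx minnn (minn_idPr kle) pid_mx_1.
pose Y := selmx S *m F2 *m Z0.
have YY : Y *m Y^t* = diag_mx (\row_i (i \in S)%:R).
  rewrite /Y !trmx_mul !map_mxM !mulmxA -(mulmxA _ Z0) (unitarymxP Z0u) mulmx1.
  by rewrite -(mulmxA _ F2) F2u mulmx1 selmx_tr.
have YN : Y *m N0^t* = 0 by rewrite /Y -mulmxA Z0N mulmx0.
have NY : N0 *m Y^t* = 0.
  have := congr1 (fun M => M^t*) YN; rewrite /= trmx_mul map_mxM trmxCK.
  by rewrite trmx0 map_mx0.
have sE : diag_mx s *m selmx S = 0.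
  apply/matrixP => i j; rewrite mul_diag_mx !mxE; case: eqP => [->|]; last by rewrite mulr0.
  by have := enum_valP j; rewrite inE /= => /eqP si; rewrite si mul0r.
pose N := N0 + Y.
have Nu : N \is unitarymx.
  apply/unitarymxP; rewrite /N linearD map_mxD mulmxDl !mulmxDr NN NY YN YY addr0 add0r.
  apply/matrixP => i j; rewrite !mxE; case: (eqVneq i j) => [_|_]; last by rewrite /= !mulr0n addr0.
  by rewrite /= !mulr1n inE; case: eqP => _; rewrite ?addr0 ?add0r.
have AN : A = P^t* *m diag_mx s *m N.
  rewrite -mulmxA /N mulmxDr -BN /Y !mulmxA sE !mul0mx addr0 BE mulmxA unitary_sq //.
  by rewrite mul1mx.
exists s; split => //; exists (P^t*), (N^t*); split; first by apply/unitaryE; rewrite trmxC_unitary.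
by split; [apply/unitaryE; rewrite trmxC_unitary | rewrite adjE trmxCK].
Qed.
Lemma trnorm_svd n (A : 'M[C]_n) : is_svd A (epsilon (inhabits 0) (is_svd A)).
Proof. exact: (epsilon_spec (inhabits 0) (is_svd A) (svd_exists A)). Qed.


Lemma trnorm_ge n (A W : 'M[C]_n) : W \is unitarymx -> 'Re (\tr (W *m A)) <= trnorm A.
Proof.
move=> Wu; rewrite /trnorm; have [s0 [U [V [/unitaryE Uu [/unitaryE Vu E]]]]] := trnorm_svd A.
move: s0 E; set s := epsilon _ _ => s0 ->; rewrite adjE.
rewrite !mulmxA mxtrace_mulC !mulmxA; apply: re_tr_le => //.
by rewrite !mul_unitarymx // trmxC_unitary.
Qed.

Lemma trnorm_ge0 n (A : 'M[C]_n) : 0 <= trnorm A.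
Proof.
rewrite /trnorm; have [s0 _] := trnorm_svd A.
by apply: sumr_ge0 => i _; apply: s0.
Qed.

Lemma trnorm_eq n (A : 'M[C]_n) : exists W, W \is unitarymx /\ \tr (W *m A) = trnorm A.
Proof.
rewrite /trnorm; have [s0 [U [V [/unitaryE Uu [/unitaryE Vu E]]]]] := trnorm_svd A.
move: s0 E; set s := epsilon _ _ => s0 ->; rewrite adjE.
exists (V *m U^t*); split; first by rewrite mul_unitarymx // trmxC_unitary.
rewrite !mulmxA -(mulmxA V) unitary_sq // mulmx1 mxtrace_mulC mulmxA unitary_sq //.
by rewrite mul1mx mxtrace_diag.
Qed.

Lemma trnorm_Re n (A : 'M[C]_n) : exists W, W \is unitarymx /\ 'Re (\tr (W *m A)) = trnorm A.
Proof.
have [W [Wu E]] := trnorm_eq A; exists W; split => //.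
by rewrite E; apply/Creal_ReP/ger0_real/trnorm_ge0.
Qed.

Lemma trnormN n (A : 'M[C]_n) : trnorm (- A) <= trnorm A.
Proof.
have [W [Wu <-]] := trnorm_Re (- A).
rewrite mulmxN -mulNmx; apply: trnorm_ge.
apply/unitarymxP; rewrite map_trmx map_mxN /= linearN /= mulNmx opprK.
by apply/unitarymxP.
Qed.

Definition trmap n m (t : 'M[C]_m) (X : 'M[C]_n) : 'M[C]_m := \tr X *: t.
Lemma trmap_linear n m (t : 'M[C]_m) : linear (@trmap n m t).
Proof. by move=> a X Y; rewrite /trmap linearP /= scalerDl scalerA. Qed.
Lemma re_tr_sum m k (W : 'M[C]_m) (w : 'I_k -> C) (B : 'I_k -> 'M[C]_m) :
  (forall i, 0 <= w i) ->
  'Re (\tr (W *m \sum_i w i *: B i)) = \sum_i w i * 'Re (\tr (W *m B i)).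
Proof.
move=> w0; apply: (big_ind2 (fun X y => 'Re (\tr (W *m X)) = y)).
- by rewrite mulmx0 mxtrace0 raddf0.
- by move=> X1 y1 X2 y2 <- <-; rewrite mulmxDr mxtraceD raddfD.
- by move=> i _; rewrite -scalemxAr mxtraceZ ReMl ?ger0_real.
Qed.
End A.
HB.instance Definition _ (C : numClosedFieldType) n m (t : 'M[C]_m) := GRing.isLinear.Build C 'M[C]_n 'M[C]_m _ (@trmap C n m t) (@trmap_linear C n m t).

Lemma tdist_le (C : numClosedFieldType) n (X Y : 'M[C]_n) e : (tdist X Y <= e) = (trnorm (X - Y) <= e * 2).
Proof. by rewrite /tdist ler_pdivrMr. Qed.

Theorem theorem1 (C : numClosedFieldType) (n m : nat) (eps : C)
  (rho' tau' : 'M[C]_m) (Pset Eset : 'M[C]_n -> Prop) :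
  0 <= eps -> eps < 1 ->
  density rho' -> density tau' ->
  (forall rho, Pset rho -> density rho) ->
  (forall tau, Eset tau -> density tau) ->
  (exists X, conv_hull Pset X /\ aff_hull Eset X) ->
  ((exists L : {linear 'M[C]_n -> 'M[C]_m},
      forall rho tau, Pset rho -> Eset tau ->
        tdist (L rho) rho' <= eps /\ L tau = tau')
   <-> tdist rho' tau' <= eps).
Proof.
move=> e0 e1 dr dt dP dE [X [[k [w [x [w0 [w1 [xP EX]]]]]] [k' [a [y [ar [a1 [yE EY]]]]]]]].
split; last first.
  move=> H; exists (trmap tau' : {linear 'M[C]_n -> 'M[C]_m}) => rho tau Pr Et.
  have [_ tr1] := dP _ Pr; have [_ tt1] := dE _ Et.
  rewrite /= /trmap tr1 tt1 !scale1r; split => //.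
  rewrite tdist_le; rewrite tdist_le in H; apply: le_trans H.
  by rewrite -opprB trnormN.
move=> [L HL].
case: k w x w0 w1 xP EX => [|k] w x w0 w1 xP EX.
  by move: w1; rewrite big_ord0 => /eqP; rewrite eq_sym oner_eq0.
case: k' a y ar a1 yE EY => [|k'] a y ar a1 yE EY.
  by move: a1; rewrite big_ord0 => /eqP; rewrite eq_sym oner_eq0.
have Ly j : L (y j) = tau' := (HL _ (y j) (xP ord0) (yE j)).2.
have Lx i : trnorm (L (x i) - rho') <= eps * 2.
  by rewrite -tdist_le; exact: (HL (x i) (y ord0) (xP i) (yE ord0)).1.
have LX : L X = tau'.
  rewrite EY linear_sum /=.
  rewrite (eq_bigr (fun j => a j *: tau')); last by move=> j _; rewrite linearZ /= Ly.
  by rewrite -scaler_suml a1 scale1r.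
have E : rho' - tau' = \sum_i w i *: (rho' - L (x i)).
  rewrite -LX EX linear_sum /=.
  rewrite [RHS](eq_bigr (fun i => w i *: rho' - L (w i *: x i))); last first.
    move=> i _; rewrite scalerBr; congr (_ - _); rewrite linearZ //.
  by rewrite sumrB -scaler_suml w1 scale1r.
rewrite tdist_le; have [W [Wu <-]] := trnorm_Re (rho' - tau').
rewrite E re_tr_sum //.
apply: (le_trans (y := \sum_(i < k.+1) w i * (eps * 2))); last first.
  by rewrite -mulr_suml w1 mul1r.
apply: ler_sum => i _.
apply: ler_wpM2l => //.
apply: le_trans (Lx i); apply: le_trans (trnormN _); rewrite opprB.
exact: trnorm_ge.
Qed.
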